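(* There exist a connected graph $G$ of order $n\geq 2$ and a graph $H$ with connected components $H_1,\dots,H_k$ such that $\chi_L(G\odot H)=\max\{\chi_L(H_t+K_1)\mid 1\leq t\leq k\}$.
   Context: All graphs are finite and simple. A $k$-coloring of a connected graph $G$ is a map $c:V(G)\to\{1,\dots,k\}$ with $c(u)\neq c(v)$ for adjacent $u,v$; it induces the partition $\Pi=\{C_1,\dots,C_k\}$ into color classes $C_i=c^{-1}(i)$. The color code of $v$ is $c_\Pi(v)=(d(v,C_1),\dots,d(v,C_k))$ with $d(v,C_i)=\min\{d(v,x): x\in C_i\}$ (graph distance). $c$ is a locating coloring if distinct vertices have distinct color codes; the locating-chromatic number $\chi_L(G)$ is the least $k$ for which a locating $k$-coloring exists. The corona product $G\odot H$ of a graph $G$ with vertex set $\{a_1,\dots,a_n\}$ and a graph $H$ is obtained from one copy of $G$ and $n$ disjoint copies of $H$ by joining $a_i$ to every vertex of the $i$-th copy of $H$. For a graph $F$, $F+K_1$ denotes the join of $F$ with a single new vertex adjacent to all vertices of $F$. *)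

(* Defs.v *)
From mathcomp Require Import all_boot.
Set Implicit Arguments. Unset Strict Implicit. Unset Printing Implicit Defensive.

Definition simple_graph (T : finType) (e : rel T) : Prop :=
  irreflexive e /\ symmetric e.

Definition connected_graph (T : finType) (e : rel T) : Prop :=
  forall u v : T, connect e u v.

Fixpoint ball (T : finType) (e : rel T) (k : nat) (u : T) : {set T} :=
  match k with
  | 0 => [set u]
  | k'.+1 => let B := ball e k' u in B :|: [set y | [exists x in B, e x y]]
  end.

(* graph distance; equals #|T| when v is unreachable from u
   (never happens in the connected graphs used below) *)
Definition gdist (T : finType) (e : rel T) (u v : T) : nat :=
  find (fun k => v \in ball e k u) (iota 0 #|T|).

Definition gdist_set (T : finType) (e : rel T) (v : T) (C : {set T}) : nat :=
  \big[minn/#|T|]_(x in C) gdist e v x.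

Definition color_class (T : finType) (k : nat) (c : {ffun T -> 'I_k}) (i : 'I_k)
  : {set T} := [set x | c x == i].

Definition color_code (T : finType) (e : rel T) (k : nat) (c : {ffun T -> 'I_k})
  (v : T) : {ffun 'I_k -> nat} :=
  [ffun i => gdist_set e v (color_class c i)].

Definition locating_coloring (T : finType) (e : rel T) (k : nat)
  (c : {ffun T -> 'I_k}) : bool :=
  [&& [forall u, forall v, e u v ==> (c u != c v)],
      [forall i, color_class c i != set0] &
      [forall u, forall v, (color_code e c u == color_code e c v) ==> (u == v)]].

Definition loc_colorable (T : finType) (e : rel T) (k : nat) : bool :=
  [exists c : {ffun T -> 'I_k}, locating_coloring e c].

(* locating-chromatic number: least k admitting a locating k-coloring
   (k = #|T| always works, so the search range suffices) *)
Definition chiL (T : finType) (e : rel T) : nat :=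
  find (loc_colorable e) (iota 0 #|T|.+1).

(* corona product G ⊙ H: vertex set V(G) + V(G) x V(H) *)
Definition corona_rel (T U : finType) (e : rel T) (f : rel U) :
  rel (T + (T * U)) :=
  fun x y =>
    match x, y with
    | inl a, inl b => e a b
    | inl a, inr (b, _) => a == b
    | inr (a, _), inl b => a == b
    | inr (a, u), inr (b, v) => (a == b) && f u v
    end.

Definition components (U : finType) (f : rel U) : {set {set U}} :=
  [set [set y | connect f x y] | x : U].

(* H[C] + K_1: induced subgraph on C joined with a new vertex None *)
Definition cone_rel (U : finType) (f : rel U) (C : {set U}) :
  rel (option (sig (fun x : U => x \in C))) :=
  fun x y =>
    match x, y with
    | None, None => false
    | None, Some _ => true
    | Some _, None => true
    | Some a, Some b => f (val a) (val b)
    end.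

Definition chiL_cone (U : finType) (f : rel U) (C : {set U}) : nat :=
  @chiL (option (sig (fun x : U => x \in C))) (@cone_rel U f C).

(* Main.v *)
Require Import Defs.
From mathcomp Require Import all_boot zify.

Section Gen.
Variables (T : finType) (e : rel T).

Lemma ball_self k u : u \in ball e k u.
Proof. elim: k => [|k IH] /=; first by rewrite inE. by rewrite inE IH. Qed.

Lemma in_ball1 u v : (v \in ball e 1 u) = (v == u) || e u v.
Proof.
rewrite /= !inE; congr (_ || _); apply/existsP/idP => [[x /andP[]]|H].
  by rewrite inE => /eqP->.
by exists u; rewrite inE eqxx.
Qed.

Lemma gdist0 u v : (gdist e u v == 0) = (u == v).
Proof.
rewrite /gdist; have : 0 < #|T| by apply/card_gt0P; exists u.
case: #|T| => // n _ /=; rewrite inE; case: ifP => [/eqP->|/eqP N]; first by rewrite !eqxx.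
by apply/esym/eqP => E; apply: N.
Qed.

Lemma gdist_le1 u v : 1 < #|T| -> (gdist e u v <= 1) = (v == u) || e u v.
Proof.
rewrite /gdist; case: #|T| => [|[|n]] //= _.
rewrite -in_ball1 inE; case: ifP => [/eqP->|_]; first by rewrite ball_self.
by case: ifP.
Qed.

Lemma bigmin_le_seq (I : eqType) (r : seq I) (P : pred I) (F : I -> nat) d m :
  (\big[minn/d]_(i <- r | P i) F i <= m) = (d <= m) || has (fun i => P i && (F i <= m)) r.
Proof.
elim: r => [|x r IH]; first by rewrite big_nil orbF.
rewrite big_cons /=; case: (P x) => /=; last exact: IH.
rewrite geq_min IH; case: (F x <= m); by rewrite ?orbT.
Qed.

Lemma bigmin_le (I : finType) (P : pred I) (F : I -> nat) d m :
  (\big[minn/d]_(i | P i) F i <= m) = (d <= m) || [exists i, P i && (F i <= m)].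
Proof.
rewrite bigmin_le_seq; congr (_ || _); apply/hasP/existsP => [[i _ H]|[i H]].
  by exists i.
by exists i => //; rewrite mem_index_enum.
Qed.

Lemma gset0 v (C : {set T}) : (gdist_set e v C == 0) = (v \in C).
Proof.
rewrite -leqn0 /gdist_set bigmin_le.
have -> : (#|T| <= 0) = false by apply/negbTE; rewrite -ltnNge; apply/card_gt0P; exists v.
apply/existsP/idP => [[x /andP[Hx]]|H]; first by rewrite leqn0 gdist0 => /eqP->.
by exists v; rewrite H leqn0 gdist0 eqxx.
Qed.

Lemma gset1 v (C : {set T}) : 1 < #|T| ->
  (gdist_set e v C <= 1) = [exists x, (x \in C) && ((x == v) || e v x)].
Proof.
move=> HT; rewrite /gdist_set bigmin_le.
have -> : (#|T| <= 1) = false by apply/negbTE; rewrite -ltnNge.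
by apply: eq_existsb => x; rewrite gdist_le1.
Qed.

Lemma twin_ball_dir u v (tw : forall y, e u y = e v y) k y :
  y != u -> y != v -> y \in ball e k u -> y \in ball e k v.
Proof.
elim: k y => [|k IH] y Hu Hv /=; first by rewrite inE (negbTE Hu).
rewrite !inE => /orP[H|/existsP[x /andP[Hx Hxy]]]; first by rewrite IH.
apply/orP; right; apply/existsP.
case: (eqVneq x u) => [Exu|Nxu].
  by exists v; rewrite ball_self -tw -Exu.
case: (eqVneq x v) => [Exv|Nxv].
  by exists v; rewrite ball_self -Exv.
by exists x; rewrite Hxy IH.
Qed.

Lemma twin_gdist u v (tw : forall y, e u y = e v y) y :
  y != u -> y != v -> gdist e u y = gdist e v y.
Proof.
move=> Hu Hv; rewrite /gdist; apply: eq_find => k /=.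
apply/idP/idP; first exact: twin_ball_dir.
by apply: twin_ball_dir => // z; rewrite tw.
Qed.

Lemma loc_proper k (c : {ffun T -> 'I_k}) u v :
  locating_coloring e c -> e u v -> c u != c v.
Proof. by case/and3P => /forallP/(_ u)/forallP/(_ v)/implyP. Qed.

Lemma loc_twins k (c : {ffun T -> 'I_k}) u v :
  locating_coloring e c -> u != v -> (forall y, e u y = e v y) -> c u != c v.
Proof.
case/and3P => _ _ /forallP/(_ u)/forallP/(_ v)/implyP H Nuv tw.
apply/negP => /eqP Ec; move: Nuv; rewrite H //; apply/eqP/ffunP => i; rewrite !ffunE.
case: (eqVneq (c u) i) => [Ei|Ni].
  have Hu : u \in color_class c i by rewrite inE Ei.
  have Hv : v \in color_class c i by rewrite inE -Ec Ei.
  by move: Hu Hv; rewrite -!(gset0 _ (color_class c i)) => /eqP-> /eqP->.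
apply: eq_bigr => x; rewrite inE => /eqP Ex; apply: twin_gdist => //.
  by apply/eqP => Exu; move: Ni; rewrite -Exu Ex eqxx.
by apply/eqP => Exv; move: Ni; rewrite Ec -Exv Ex eqxx.
Qed.

Lemma code_diff k (c : {ffun T -> 'I_k}) u v :
  c u != c v -> color_code e c u != color_code e c v.
Proof.
move=> N; apply/negP => /eqP /ffunP /(_ (c u)); rewrite !ffunE => E.
have : u \in color_class c (c u) by rewrite inE.
by rewrite -gset0 E gset0 inE eq_sym (negbTE N).
Qed.

Lemma code_diff1 k (c : {ffun T -> 'I_k}) u v i :
  (gdist_set e u (color_class c i) <= 1) != (gdist_set e v (color_class c i) <= 1) ->
  color_code e c u != color_code e c v.
Proof.
move=> N; apply/negP => /eqP /ffunP /(_ i); rewrite !ffunE => E.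
by move: N; rewrite E eqxx.
Qed.

Lemma find_iota_eq (P : pred nat) a n m :
  a <= m < a + n -> P m -> (forall k, a <= k < m -> ~~ P k) ->
  find P (iota a n) = m - a.
Proof.
elim: n a => [|n IH] a; first by rewrite addn0; lia.
move=> Hm Pm Hk /=; case: (eqVneq a m) => [->|Nam]; first by rewrite Pm subnn.
have Pa : P a = false by apply/negbTE/Hk; move: Hm Nam; lia.
rewrite Pa IH //; first by move: Hm Nam; lia.
  by move: Hm Nam; lia.
by move=> j Hj; apply: Hk; move: Hj; lia.
Qed.

Lemma chiL_eq m : m <= #|T| -> loc_colorable e m ->
  (forall k, k < m -> ~~ loc_colorable e k) -> chiL e = m.
Proof.
move=> Hm Pm Hk; rewrite /chiL (@find_iota_eq _ 0 _ m) ?subn0 //.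


Qed.

Lemma inj_loc : irreflexive e -> loc_colorable e #|T|.
Proof.
move=> irr; apply/existsP; exists [ffun x => enum_rank x]; apply/and3P; split.
- apply/forallP => u; apply/forallP => v; apply/implyP => Huv; rewrite !ffunE.
  apply/negP => /eqP /enum_rank_inj Euv; by move: Huv; rewrite Euv irr.
- apply/forallP => i; apply/set0Pn; exists (enum_val i); by rewrite inE ffunE enum_valK.
- apply/forallP => u; apply/forallP => v; apply/implyP => H.
  case: (eqVneq u v) => // N; exfalso; move: H; apply/negP; apply: code_diff.
  by rewrite !ffunE; apply/negP => /eqP /enum_rank_inj /eqP; rewrite (negbTE N).
Qed.

Lemma four_distinct k (a b c d : 'I_k) : a != b -> a != c -> a != d -> b != c -> b != d -> c != d -> 4 <= k.
Proof.
case: a b c d => [a Ha] [b Hb] [c Hc] [d Hd]; rewrite -!val_eqE /=.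
move=> /eqP ? /eqP ? /eqP ? /eqP ? /eqP ? /eqP ?; lia.
Qed.

End Gen.

Definition e0 : rel bool := fun a b => a != b.
Definition f0 : rel (option bool) := fun x y => (x == None) != (y == None).
Definition T1 : finType := (bool + bool * option bool)%type.
Definition e1 : rel T1 := corona_rel e0 f0.

Lemma ex8 (P : pred T1) : [exists x, P x] =
  [|| P (inl true), P (inl false), P (inr (true, None)), P (inr (true, Some true)),
      P (inr (true, Some false)), P (inr (false, None)), P (inr (false, Some true))
    | P (inr (false, Some false))].
Proof.
apply/existsP/idP => [[x]|].
  by case: x => [[]|[[] [[]|]]] ->; rewrite ?orbT.
by do 7 (case/orP; first by move=> H; eexists; exact: H); move=> H; eexists; exact: H.
Qed.

Lemma card_T1 : #|T1| = 8.
Proof. by rewrite card_sum card_prod card_option card_bool. Qed.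

Definition o (n : nat) (H : n < 4) : 'I_4 := Ordinal H.

Definition g1 (x : T1) : 'I_4 :=
  match x with
  | inl true => @o 0 isT
  | inl false => @o 1 isT
  | inr (true, Some true) => @o 1 isT
  | inr (true, None) => @o 2 isT
  | inr (true, Some false) => @o 3 isT
  | inr (false, Some true) => @o 0 isT
  | inr (false, None) => @o 3 isT
  | inr (false, Some false) => @o 2 isT
  end.

Lemma corona_loc : loc_colorable e1 4.
Proof.
apply/existsP; exists [ffun x => g1 x]; apply/and3P; split.
- apply/forallP => u; apply/forallP => v; apply/implyP; rewrite !ffunE.
  by case: u => [[]|[[] [[]|]]]; case: v => [[]|[[] [[]|]]].
- apply/forallP => -[[|[|[|[|n]]]] Hi] //; apply/set0Pn.
  + by exists (inl true); rewrite inE ffunE.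
  + by exists (inl false); rewrite inE ffunE.
  + by exists (inr (true, None)); rewrite inE ffunE.
  + by exists (inr (false, None)); rewrite inE ffunE.
- apply/forallP => u; apply/forallP => v; apply/implyP => H.
  case: (eqVneq u v) => // N; exfalso; move: H; apply/negP.
  case: (boolP ([ffun x => g1 x] u == [ffun x => g1 x] v)) => E; last exact: code_diff.
  have H8 : 1 < #|T1| by rewrite card_T1.
  move: E N; rewrite !ffunE.
  case: u => [[]|[[] [[]|]]]; case: v => [[]|[[] [[]|]]] //= _ _;
  first [ apply: (@code_diff1 _ _ _ _ _ _ (@o 0 isT)); rewrite !gset1 // !ex8 /color_class !inE !ffunE; by vm_compute
        | apply: (@code_diff1 _ _ _ _ _ _ (@o 1 isT)); rewrite !gset1 // !ex8 /color_class !inE !ffunE; by vm_compute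
        | apply: (@code_diff1 _ _ _ _ _ _ (@o 2 isT)); rewrite !gset1 // !ex8 /color_class !inE !ffunE; by vm_compute
        | apply: (@code_diff1 _ _ _ _ _ _ (@o 3 isT)); rewrite !gset1 // !ex8 /color_class !inE !ffunE; by vm_compute ].
Qed.

Lemma chiL_corona : chiL e1 = 4.
Proof.
apply: chiL_eq; first by rewrite card_T1.
  exact: corona_loc.
move=> k Hk; apply/existsP => -[c Hc].
have: 4 <= k; last by rewrite leqNgt Hk.
apply: (@four_distinct _ (c (inl true)) (c (inr (true, None)))
   (c (inr (true, Some true))) (c (inr (true, Some false))));
  try (apply: (@loc_proper _ _ _ _ _ _ Hc); by vm_compute).
apply: (@loc_twins _ _ _ _ _ _ Hc) => //.
Qed.

Lemma f0_conn x y : connect f0 x y.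
Proof.
have H z : connect f0 z None /\ connect f0 None z.
  case: z => [b|]; last by split; apply: connect0.
  by split; apply: connect1.
by apply: connect_trans (proj1 (H x)) (proj2 (H y)).
Qed.

Lemma comps_f0 : components f0 = [set setT].
Proof.
apply/setP => C; rewrite !inE; apply/imsetP/eqP => [[x _ ->]|->].
  by apply/setP => y; rewrite !inE f0_conn.
by exists None => //; apply/setP => y; rewrite !inE f0_conn.
Qed.

Definition S : finType := option {x : option bool | x \in [set: option bool]}.

Lemma card_S : #|S| = 4.
Proof. by rewrite card_option card_sig cardsT card_option card_bool. Qed.

Lemma cone_chiL : chiL_cone f0 setT = 4.
Proof.
rewrite /chiL_cone -[in RHS]card_S; apply: chiL_eq => //.
  apply: inj_loc; case=> [[x Hx]|] //=; rewrite /f0; by case: x Hx.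
move=> k Hk; apply/existsP => -[c Hc].
have: 4 <= k; last by rewrite leqNgt -card_S Hk.
pose st : {x : option bool | x \in [set: option bool]} := exist _ (Some true) (in_setT _).
pose sf : {x : option bool | x \in [set: option bool]} := exist _ (Some false) (in_setT _).
pose sn : {x : option bool | x \in [set: option bool]} := exist _ None (in_setT _).
apply: (@four_distinct _ (c None) (c (Some sn)) (c (Some st)) (c (Some sf)));
  try (apply: (@loc_proper _ _ _ _ _ _ Hc); by vm_compute).
apply: (@loc_twins _ _ _ _ _ _ Hc) => //.
Qed.

Theorem theorem2 :
  exists (T : finType) (e : rel T) (U : finType) (f : rel U),
    [/\ simple_graph e, connected_graph e, 2 <= #|T|, simple_graph f
      & (0 < #|U|) /\
        chiL (corona_rel e f) = \max_(C in components f) chiL_cone f C].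
Proof.
exists bool, e0, (option bool), f0; split.
- by split; [move=> a; rewrite /e0 eqxx | move=> a b; rewrite /e0 eq_sym].
- by move=> [] []; try apply: connect0; apply: connect1.
- by rewrite card_bool.
- by split; [move=> a; rewrite /f0 eqxx | move=> a b; rewrite /f0 eq_sym].
- split; first by rewrite card_option card_bool.
  rewrite comps_f0 big_set1 cone_chiL; exact: chiL_corona.
Qed.
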